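(* Let $G=(V,E)$ be an undirected graph, $f,g:V\to\mathbb{Z}$ with $f\le g$, suppose $G$ admits an $(f,g)$-bounded orientation, and let $T\subseteq V$. Then there exist functions $f',g':V\to\mathbb{Z}$ with $f\le f'\le g'\le g$ and a subset $X_T\subseteq V$ such that an $(f,g)$-bounded orientation $D$ of $G$ minimizes the in-degree $\varrho_D(T)$ of $T$ (among all $(f,g)$-bounded orientations of $G$) if and only if $D$ is an $(f',g')$-bounded orientation with $\varrho_D(X_T)=0$.
   Context: $\varrho_D(v)$ is the number of arcs with head $v$; $\varrho_D(X)$ is the number of arcs with head in $X$ and tail in $V-X$. An orientation is $(f,g)$-bounded if $f(v)\le\varrho_D(v)\le g(v)$ for all $v\in V$. *)

(* Defs.v *)
From mathcomp Require Import all_boot all_order all_algebra.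
Set Implicit Arguments. Unset Strict Implicit. Unset Printing Implicit Defensive.
Import Order.TTheory GRing.Theory Num.Theory.

(* An undirected (multi)graph G = (V, E): V and E finite types, each edge e
   has two (unordered) endpoints given by [ends e] (the order of the pair is
   only a naming convention).  Loops and parallel edges are allowed.
   An orientation D of G is a function [D : E -> bool]: if [D e] is true,
   e is oriented from (ends e).1 to (ends e).2, otherwise the reverse. *)

Section Orient.
Variables (V E : finType) (ends : E -> V * V).

Definition orientation := E -> bool.

Definition head (D : orientation) (e : E) : V :=
  if D e then (ends e).2 else (ends e).1.
Definition tail (D : orientation) (e : E) : V :=
  if D e then (ends e).1 else (ends e).2.

Definition indeg (D : orientation) (v : V) : nat :=
  #|[set e : E | head D e == v]|.

Definition indegS (D : orientation) (X : {set V}) : nat :=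
  #|[set e : E | (head D e \in X) && (tail D e \notin X)]|.

Definition bounded (f g : V -> int) (D : orientation) : Prop :=
  forall v, (f v <= (indeg D v)%:Z <= g v)%R.
End Orient.

(* Main.v *)
Require Import Defs.
From mathcomp Require Import all_boot all_order all_algebra.
From mathcomp Require Import zify.
From Stdlib Require Import Classical.
Import Order.TTheory GRing.Theory Num.Theory.
Set Implicit Arguments. Unset Strict Implicit.

Section Aux.
Variables (V E : finType) (ends : E -> V * V).

Lemma card_sum (P : pred E) : #|[set e | P e]| = \sum_e (P e : nat).
Proof.
rewrite -sum1dep_card big_mkcond /=; apply: eq_bigr => e _; by case: (P e).
Qed.

Definition flip (D : orientation E) e0 : orientation E :=
  fun e => if e == e0 then ~~ D e else D e.

Lemma indeg_flip D e0 w :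
  indeg ends (flip D e0) w + (Defs.head ends D e0 == w) =
  indeg ends D w + (tail ends D e0 == w).
Proof.
rewrite /indeg !card_sum (bigD1 e0) //= [in RHS](bigD1 e0) //=.
have -> : Defs.head ends (flip D e0) e0 = tail ends D e0.
  by rewrite /Defs.head /tail /flip eqxx; case: (D e0).
rewrite (eq_bigr (fun e => (Defs.head ends D e == w) : nat)); last first.
  by move=> e /negbTE ne; rewrite /Defs.head /flip ne.
lia.
Qed.

Definition iX (X : {set V}) :=
  #|[set e : E | ((ends e).1 \in X) && ((ends e).2 \in X)]|.

Lemma sum_indeg D (X : {set V}) :
  \sum_(v in X) indeg ends D v = indegS ends D X + iX X.
Proof.
rewrite /indeg /indegS /iX !card_sum.
under eq_bigr do rewrite card_sum.
rewrite exchange_big /= -big_split /=; apply: eq_bigr => e _.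
have HH : forall x, \sum_(i in X) (x == i : nat) = (x \in X).
  move=> x; case hX: (x \in X).
    rewrite (bigD1 x) /= ?eqxx // big1 // => i /andP[_ ne].
    by rewrite eq_sym (negbTE ne).
  rewrite big1 // => i iX; case: eqP => // h; by rewrite h iX in hX.
rewrite /Defs.head /tail; case: (D e); rewrite HH; case: ((ends e).1 \in X); case: ((ends e).2 \in X) => //.
Qed.

Lemma flip_path (D : orientation E) (u : V) (p : seq V) :
  path (fun x y => [exists e, (tail ends D e == x) && (Defs.head ends D e == y)]) u p ->
  uniq (u :: p) ->
  exists D' : orientation E, forall w,
    indeg ends D' w + (last u p == w) = indeg ends D w + (u == w).
Proof.
elim: p D u => [|w1 p IH] D u /=.
  by move=> _ _; exists D.
move=> /andP[/existsP[e /andP[/eqP te /eqP he]] pth] /andP[uNp up].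
set D1 := flip D e.
have pth1 : path (fun x y => [exists e, (tail ends D1 e == x) && (Defs.head ends D1 e == y)]) w1 p.
  apply: (@sub_in_path _ (mem (w1 :: p))) pth; last by apply/allP.
  move=> x y xi yi /existsP[e' /andP[/eqP te' /eqP he']].
  apply/existsP; exists e'.
  have ne : e' != e.
    apply/eqP => ee; subst e'. rewrite te in te'. subst x.
    by move: uNp; rewrite xi.
  by rewrite /D1 /Defs.head /tail /flip (negbTE ne) -/(Defs.head _ _ _) -/(tail _ _ _) te' he' !eqxx.
have [D' HD'] := IH D1 w1 pth1 up.
exists D' => w.
have := HD' w; have := indeg_flip D e w; rewrite -/D1 he te.
lia.
Qed.
Lemma PoszSum (P : pred V) (F : V -> nat) :
  Posz (\sum_(i | P i) F i)%N = (\sum_(i | P i) (Posz (F i)))%R.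
Proof. exact: (big_morph Posz PoszD (erefl _)). Qed.

Lemma sum_eqb (X : {set V}) x : \sum_(i in X) (x == i : nat) = (x \in X).
Proof.
case hX: (x \in X).
  rewrite (bigD1 x) /= ?eqxx // big1 // => i /andP[_ ne].
  by rewrite eq_sym (negbTE ne).
rewrite big1 // => i iX; case: eqP => // h; by rewrite h iX in hX.
Qed.

Lemma exists_opt (f g : V -> int) (T : {set V}) :
  (exists D, bounded ends f g D) ->
  exists D0, bounded ends f g D0 /\
    forall D', bounded ends f g D' -> indegS ends D0 T <= indegS ends D' T.
Proof.
move=> [D HD].
suff H : forall n D, bounded ends f g D -> indegS ends D T <= n ->
  exists D0, bounded ends f g D0 /\
    forall D', bounded ends f g D' -> indegS ends D0 T <= indegS ends D' T.
  exact: (H _ D HD (leqnn _)).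
elim=> [|n IH] D1 HD1 le1.
  by exists D1; split => // D' _; move: le1; rewrite leqn0 => /eqP ->.
case: (classic (forall D', bounded ends f g D' -> indegS ends D1 T <= indegS ends D' T)) => H.
  by exists D1.
apply: NNPP => H2; apply: H => D' bD'; apply: NNPP => H3.
apply: H2; apply: (IH D') => //; lia.
Qed.

Lemma decomp (D : orientation E) (T X : {set V}) (f g : V -> int) :
  (Posz (indegS ends D T)) =
   ((Posz (iX X)) - (Posz (iX T)) - \sum_(v in X :\: T) g v + \sum_(v in T :\: X) f v
   + (Posz (indegS ends D X)) + \sum_(v in X :\: T) (g v - (Posz (indeg ends D v)))
   + \sum_(v in T :\: X) ((Posz (indeg ends D v)) - f v))%R.
Proof.
have h1 := sum_indeg D T; have h2 := sum_indeg D X.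
rewrite (@big_setID _ _ _ _ T X) /= in h1; rewrite (@big_setID _ _ _ _ X T) /= setIC in h2.
rewrite !sumrB -!PoszSum.
set sg := (\sum_(v in X :\: T) g v)%R. set sf := (\sum_(v in T :\: X) f v)%R.
lia.
Qed.
End Aux.

Theorem corollary5p12 (V E : finType) (ends : E -> V * V) (f g : V -> int)
  (hfg : forall v, (f v <= g v)%R)
  (hex : exists D : orientation E, bounded ends f g D)
  (T : {set V}) :
  exists (f' g' : V -> int) (XT : {set V}),
    (forall v, (f v <= f' v)%R /\ (f' v <= g' v)%R /\ (g' v <= g v)%R) /\
    forall D : orientation E, bounded ends f g D ->
      ((forall D' : orientation E, bounded ends f g D' ->
          indegS ends D T <= indegS ends D' T)
       <-> (bounded ends f' g' D /\ indegS ends D XT = 0)).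
Proof.
have [D0 [b0 opt0]] := exists_opt T hex.
pose Z := [set t in T | (f t < Posz (indeg ends D0 t))%R].
pose r : rel V := fun x y => [exists e, (tail ends D0 e == x) && (Defs.head ends D0 e == y)].
pose X := [set v | [exists t in Z, connect r v t]].
exists (fun v => if (v \in X) && (v \notin T) then g v else f v),
       (fun v => if (v \notin X) && (v \in T) then f v else g v), X.
have hA : indegS ends D0 X = 0.
  apply/eqP; rewrite cards_eq0; apply/eqP/setP => e; rewrite !inE.
  apply/negP => /andP[hx tx]; move: hx tx => /existsP[t /andP[tZ ct]].
  case/negP; apply/existsP; exists t; rewrite tZ /=.
  apply: connect_trans ct; apply: connect1; apply/existsP; exists e; by rewrite !eqxx.
have hB : forall v, v \in X -> v \notin T -> Posz (indeg ends D0 v) = g v.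
  move=> v vX vT; apply: NNPP => ne.
  have lt : (Posz (indeg ends D0 v) < g v)%R.
    by rewrite lt_neqAle; apply/andP; split; [apply/eqP | case/andP: (b0 v)].
  move: vX; rewrite inE => /existsP[t /andP[tZ /connectP[p pth tl]]].
  move: tZ; rewrite tl; case: (shortenP pth) => p' pth' up' _ tZ.
  have [D' HD'] := flip_path pth' up'.
  move: tZ HD'; set t' := last v p'; clear tl t; move: t' => t tZ HD'.
  move: tZ; rewrite inE => /andP[tT ft].
  have vt : v != t by apply/eqP => e; rewrite e tT in vT.
  have bD' : bounded ends f g D'.
    move=> w; have /andP[l1 l2] := b0 w; have h := HD' w; apply/andP.
    case: (eqVneq v w) => [ew|vw].
      subst w; rewrite eqxx eq_sym (negbTE vt) /= in h; split; lia.
    case: (eqVneq t w) => [ew|tw].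
      subst w; rewrite eqxx (negbTE vt) /= in h; split; lia.
    rewrite (negbTE vw) (negbTE tw) /= in h; split; lia.
  have := opt0 D' bD'.
  have s1 := sum_indeg ends D' T; have s0 := sum_indeg ends D0 T.
  have : \sum_(w in T) (indeg ends D' w + (t == w)) = \sum_(w in T) (indeg ends D0 w + (v == w)).
    by apply: eq_bigr => w _; exact: HD'.
  rewrite !big_split /= !sum_eqb tT (negbTE vT).
  lia.
have hC : forall v, v \notin X -> v \in T -> Posz (indeg ends D0 v) = f v.
  move=> v vX vT; apply: NNPP => ne.
  have lt : (f v < Posz (indeg ends D0 v))%R.
    by rewrite lt_neqAle; apply/andP; split; [apply/eqP => e; apply: ne | case/andP: (b0 v)].
  case/negP: vX; rewrite inE; apply/existsP; exists v; rewrite connect0 inE vT lt //.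
split.
  move=> v; have := hfg v.
  by case: (v \in X); case: (v \in T) => /= h; rewrite ?lexx.
have S0 : ((\sum_(v in X :\: T) (g v - Posz (indeg ends D0 v))) = 0)%R.
  by apply: big1 => v; rewrite inE => /andP[vT vX]; rewrite hB ?subrr.
have T0 : ((\sum_(v in T :\: X) (Posz (indeg ends D0 v) - f v)) = 0)%R.
  by apply: big1 => v; rewrite inE => /andP[vX vT]; rewrite hC ?subrr.
have dec0 := decomp ends D0 T X f g.
rewrite S0 T0 hA in dec0.
move=> D bD.
have dec := decomp ends D T X f g.
have Sge : (0 <= \sum_(v in X :\: T) (g v - Posz (indeg ends D v)))%R.
  by apply: sumr_ge0 => v _; rewrite subr_ge0; case/andP: (bD v).
have Tge : (0 <= \sum_(v in T :\: X) (Posz (indeg ends D v) - f v))%R.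
  by apply: sumr_ge0 => v _; rewrite subr_ge0; case/andP: (bD v).
split.
  move=> optD; have := opt0 D bD; have := optD D0 b0 => l1 l2.
  have eq3 : indegS ends D X = 0 /\
     (\sum_(v in X :\: T) (g v - Posz (indeg ends D v)))%R = 0%R /\
     (\sum_(v in T :\: X) (Posz (indeg ends D v) - f v))%R = 0%R.
    move: dec dec0 Sge Tge l1 l2.
    set a := (\sum_(v in X :\: T) (g v - Posz (indeg ends D v)))%R.
    set b := (\sum_(v in T :\: X) (Posz (indeg ends D v) - f v))%R.
    set c := (_ - _ - _ + _)%R.
    lia.
  case: eq3 => [e1 [e2 e3]].
  have H2 : forall w, w \in X :\: T -> (g w - Posz (indeg ends D w) = 0)%R.
    apply: (psumr_eq0P _ e2) => w _; rewrite subr_ge0; by case/andP: (bD w).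
  have H3 : forall w, w \in T :\: X -> (Posz (indeg ends D w) - f w = 0)%R.
    apply: (psumr_eq0P _ e3) => w _; rewrite subr_ge0; by case/andP: (bD w).
  split => // v.
  have := bD v.
  case vX: (v \in X); case vT: (v \in T) => //=.
    have := H2 v; rewrite inE vX vT => /(_ isT) h /andP[a b].
    apply/andP; split; lia.
  have := H3 v; rewrite inE vX vT => /(_ isT) h /andP[a b].
  apply/andP; split; lia.
move=> [bD' e1] D' bD''.
have e2 : (\sum_(v in X :\: T) (g v - Posz (indeg ends D v)))%R = 0%R.
  apply: big1 => v; rewrite inE => /andP[vT vX]; have := bD' v.
  rewrite vX vT /= => /andP[h _]; have := bD v => /andP[_ h2].
  apply/eqP; rewrite subr_eq0 eq_le h h2 //.
have e3 : (\sum_(v in T :\: X) (Posz (indeg ends D v) - f v))%R = 0%R.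
  apply: big1 => v; rewrite inE => /andP[vX vT]; have := bD' v.
  rewrite vX vT /= => /andP[_ h]; have := bD v => /andP[h2 _].
  apply/eqP; rewrite subr_eq0 eq_le h h2 //.
have := opt0 D' bD''.
rewrite e1 e2 e3 in dec.
move: dec dec0; set c := (_ - _ - _ + _)%R.
lia.
Qed.
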